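(* For MLAPD on a path of depth $D$ (the tree $\mathcal{T}$ is a path graph with $D$ nodes whose root $r$ is an endpoint), the online algorithm \textsc{Double} is $(4-2^{-D})$-competitive.
   Context: MLAPD: an instance is a rooted tree $\mathcal{T}$ with root $r$ and positive node costs $c(v)>0$, together with a set $\mathcal{R}$ of requests $\rho=(v,a,d)$ (node, arrival time, deadline $d\ge a$; deadlines distinct). A service $(S,t)$ is a subtree $S\ni r$ transmitted at time $t$, costing $c(S)=\sum_{u\in S}c(u)$; it satisfies $(v,a,d)$ if $v\in S$ and $a\le t\le d$. A feasible schedule satisfies every request; its cost is the sum of service costs. Online: requests revealed at arrival. $c$-competitive: cost at most $c$ times optimal on every instance. For request $\rho$ at $v$, $P_\rho$ is the set of nodes on the $r$–$v$ path; for a node set $S$, $c(r\to\gamma\mid S)=c(P_\gamma\setminus S)$. A request is pending at time $t$ if it has arrived by $t$ and was not satisfied by earlier transmissions. \textsc{Double}: when a pending request $\rho$ reaches its deadline $d_\rho$, set $S=P_\rho$; then repeat: if no pending request is unsatisfied by $S$, stop; otherwise let $\gamma$ be the pending request with earliest deadline not satisfied by $S$; if $c(S)+c(r\to\gamma\mid S)>2c(P_\rho)$ stop, else set $S\gets S\cup P_\gamma$. Finally transmit $(S,d_\rho)$. *)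

(* Defs.v *)
From mathcomp Require Import all_boot all_order all_algebra.
Set Implicit Arguments. Unset Strict Implicit. Unset Printing Implicit Defensive.
Import Order.TTheory GRing.Theory Num.Theory.
Local Open Scope ring_scope.

(* The tree is the path graph on nodes 'I_D: node 0 is the root (an endpoint)
   and the parent of node v > 0 is node v - 1. *)

Record request (D : nat) (R : Type) := Request {
  rnode : 'I_D ; rarr : R ; rdl : R }.

Section MLAPD.
Variables (R : realFieldType) (D : nat).

Definition rooted_subtree (S : {set 'I_D}) : bool :=
  [exists u in S, val u == 0%N] &&
  [forall u : 'I_D, forall v : 'I_D, ((v \in S) && (val u + 1 == val v)%N) ==> (u \in S)].

Definition set_cost (c : 'I_D -> R) (S : {set 'I_D}) : R := \sum_(u in S) c u.

Definition service := ({set 'I_D} * R)%type.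

Definition satisfies (st : service) (rho : request D R) : bool :=
  (rnode rho \in st.1) && (rarr rho <= st.2 <= rdl rho).

Definition sched_cost (c : 'I_D -> R) (sch : seq service) : R :=
  \sum_(st <- sch) set_cost c st.1.

Definition feasible (rs : seq (request D R)) (sch : seq service) : Prop :=
  all (fun st => rooted_subtree st.1) sch /\
  all (fun rho => has (fun st => satisfies st rho) sch) rs.

Definition rpath (rho : request D R) : {set 'I_D} :=
  [set u : 'I_D | (val u <= val (rnode rho))%N].

Definition pending (past : seq service) (t : R) (rho : request D R) : bool :=
  (rarr rho <= t) && ~~ has (fun st => (st.2 < t) && satisfies st rho) past.

Definition min_dl (s : seq (request D R)) : option (request D R) :=
  foldr (fun x acc => match acc with
                      | None => Some x
                      | Some y => if rdl x < rdl y then Some x else Some y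
                      end) None s.

(* The growing loop of Double, triggered by rho at time t = d_rho.
   Each non-stopping iteration strictly enlarges S, so D.+1 rounds of fuel
   always suffice for the loop to stop by itself. *)
Fixpoint double_grow (c : 'I_D -> R) (rs : seq (request D R)) (past : seq service)
    (rho : request D R) (fuel : nat) (S : {set 'I_D}) : {set 'I_D} :=
  match fuel with
  | 0%N => S
  | n.+1 =>
    let t := rdl rho in
    match min_dl [seq g <- rs | pending past t g && ~~ satisfies (S, t) g] with
    | None => S
    | Some g =>
        if set_cost c S + set_cost c (rpath g :\: S) > 2 * set_cost c (rpath rho)
        then S
        else double_grow c rs past rho n (S :|: rpath g)
    end
  end.

Definition Double (c : 'I_D -> R) (rs : seq (request D R)) : seq service :=
  foldl (fun past rho =>
           if pending past (rdl rho) rho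
           then rcons past (double_grow c rs past rho D.+1 (rpath rho), rdl rho)
           else past)
        [::] (sort (fun x y => rdl x <= rdl y) rs).

End MLAPD.
Arguments rooted_subtree {D} S.
Arguments set_cost {R D} c S.
Arguments satisfies {R D} st rho.
Arguments sched_cost {R D} c sch.
Arguments feasible {R D} rs sch.
Arguments rpath {R D} rho.
Arguments pending {R D} past t rho.
Arguments min_dl {R D} s.
Arguments double_grow {R D} c rs past rho fuel S.
Arguments Double {R D} c rs.

(* Main.v *)
From HB Require Import structures.
Require Import Defs.
From mathcomp Require Import all_boot all_order all_algebra.
From mathcomp Require Import ring lra zify.
Import Order.TTheory GRing.Theory Num.Theory.
Local Open Scope ring_scope.
Set Implicit Arguments. Unset Strict Implicit. Unset Printing Implicit Defensive.

Definition req2t D (R : Type) (r : request D R) := (rnode r, rarr r, rdl r).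
Definition t2req D (R : Type) (x : 'I_D * R * R) := Request x.1.1 x.1.2 x.2.
Lemma req2tK D R : cancel (@req2t D R) (@t2req D R). Proof. by case. Qed.
HB.instance Definition _ D (R : eqType) := Equality.copy (request D R) (can_type (@req2tK D R)).

Section G.
Variable R : realFieldType.

Lemma geom (x : R) xs : sorted (fun a b => 2 * a < b) (x :: xs) ->
  x * 2 ^+ size xs <= last x xs /\
  (\sum_(y <- x :: xs) y) * 2 ^+ size xs <= (2 ^+ (size xs).+1 - 1) * last x xs.
Proof.
elim: xs x => [|y ys IH] x /=.
  by move=> _; rewrite big_seq1 expr0 expr1 !mulr1; split => //; lra.
move=> /andP[hxy hs]; have [h1 h2] := IH y hs.
move: h2; rewrite big_cons => h2.
set p := 2 ^+ size ys in h1 h2 *.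
have hp : 0 <= p by rewrite /p exprn_ge0.
rewrite !exprS -/p; split.
  have : (2 * x) * p <= y * p by apply: ler_wpM2r => //; exact: ltW.
  lra.
have : (2 * x) * p <= y * p by apply: ler_wpM2r => //; exact: ltW.
rewrite big_cons in h2 *.
move: h2; set s := \sum_(j <- ys) j; rewrite exprS -/p => h2.
nra.
Qed.

Lemma geom_final (D : nat) (xs : seq R) (M : R) : (0 < D)%N ->
  sorted (fun a b => 2 * a < b) xs -> all (fun x => x <= M) xs -> 0 <= M ->
  (size xs <= D)%N -> 2 * \sum_(y <- xs) y <= (4 - (2 ^+ D)^-1) * M.
Proof.
move=> hD hs hall hM hsz.
set b : R := 2 ^+ D.
have hb1 : 1 <= b by apply: exprn_ege1; lra.
have hb0 : 0 < b by lra.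
have hib : b^-1 <= 1 by rewrite invf_le1.
have hib0 : 0 <= b^-1 by rewrite invr_ge0; lra.
move: hs hall hsz; case: xs => [|x xs] hs hall hsz.
  rewrite big_nil mulr0; apply: mulr_ge0 => //; lra.
have [_ h2] := geom hs.
have hl : last x xs <= M by move/allP: hall; apply; exact: mem_last.
move: hsz h2 => /= hsz; set n := size xs => h2.
set a : R := 2 ^+ n.
have ha : 1 <= a by apply: exprn_ege1; lra.
have ha0 : 0 < a by lra.
have hab : 2 * a <= b.
  rewrite /b /a -exprS; rewrite ler_eXn2l //; lra.
rewrite exprS -/a in h2.
set s := \sum_(y <- x :: xs) y in h2 *.
have hsM : s * a <= (2 * a - 1) * M.
  apply: le_trans h2 _; apply: ler_wpM2l => //; lra.
have eia : a * a^-1 = 1 by rewrite mulfV // gt_eqF.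
have eib : b * b^-1 = 1 by rewrite mulfV // gt_eqF.
have hia0 : 0 <= a^-1 by rewrite invr_ge0; lra.
have hsl : s <= 2 * M - a^-1 * M.
  have := ler_wpM2r hia0 hsM.
  have -> : s * a * a^-1 = s by rewrite -mulrA eia mulr1.
  have -> : (2 * a - 1) * M * a^-1 = 2 * M - a^-1 * M.
    by field; rewrite gt_eqF.
  done.
have hinv : b^-1 <= 2 * a^-1.
  have h3 : b^-1 * (2 * a) <= 1.
    by have := ler_wpM2l hib0 hab; rewrite [b^-1 * b]mulrC eib.
  have := ler_wpM2r hia0 h3.
  have -> : b^-1 * (2 * a) * a^-1 = 2 * b^-1.
    by field; rewrite !gt_eqF.
  rewrite mul1r => h4; lra.
have : b^-1 * M <= 2 * a^-1 * M by apply: ler_wpM2r.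
nra.
Qed.
End G.

Section Proof.
Variables (R : realFieldType) (D : nat) (hD : (0 < D)%N)
  (c : 'I_D -> R) (hc : forall u, 0 < c u)
  (rs : seq (request D R))
  (hwf : all (fun rho => rarr rho <= rdl rho) rs)
  (hdist : uniq (map (@rdl D R) rs)).

Definition dc (S : {set 'I_D}) := forall u v : 'I_D, (val u <= val v)%N -> v \in S -> u \in S.

Lemma cost_U (A B : {set 'I_D}) : set_cost c (A :|: B) = set_cost c A + set_cost c (B :\: A).
Proof.
rewrite /set_cost (big_setID A); congr (_ + _); apply: eq_bigl => u; rewrite !inE;
  by case: (u \in A); case: (u \in B).
Qed.

Lemma cost_ge0 (A : {set 'I_D}) : 0 <= set_cost c A.
Proof. by apply: sumr_ge0 => u _; apply: ltW. Qed.

Lemma cost_sub (A B : {set 'I_D}) : A \subset B -> set_cost c A <= set_cost c B.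
Proof.
move=> /setUidPr hAB; rewrite -hAB cost_U; rewrite lerDl; exact: cost_ge0.
Qed.

Lemma grow_congr (P Q : seq (service R D)) (rho : request D R) : (forall g, pending P (rdl rho) g = pending Q (rdl rho) g) ->
  forall n S, double_grow c rs P rho n S = double_grow c rs Q rho n S.
Proof.
move=> hPQ; elim=> [//|n IH] S /=.
have -> : [seq g <- rs | pending P (rdl rho) g && ~~ satisfies (S, rdl rho) g] =
          [seq g <- rs | pending Q (rdl rho) g && ~~ satisfies (S, rdl rho) g].
  by apply: eq_filter => g; rewrite hPQ.
by case: min_dl => // g; case: ifP.
Qed.

Lemma pending_rcons (P : seq (service R D)) S t' t (g : request D R) : t <= t' -> pending (rcons P (S, t')) t g = pending P t g.
Proof.
move=> htt; rewrite /pending has_rcons /=.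
by rewrite ltNge htt.
Qed.

Definition srs := sort (fun x y : request D R => rdl x <= rdl y) rs.

Lemma srs_sorted : sorted (fun x y : request D R => rdl x < rdl y) srs.
Proof.
have hs : sorted (fun x y : request D R => rdl x <= rdl y) srs.
  by apply: sort_sorted => x y; apply: le_total.
have hu : uniq (map (@rdl D R) srs).
  by rewrite (perm_uniq (perm_map _ (permEl (perm_sort _ _)))).
have : sorted <%O (map (@rdl D R) srs).
  by rewrite lt_sorted_uniq_le hu sorted_map.
by rewrite sorted_map.
Qed.

Lemma mem_srs x : (x \in srs) = (x \in rs).
Proof. by rewrite mem_sort. Qed.

Definition step (past : seq (service R D)) (rho : request D R) :=
  if pending past (rdl rho) rho
  then rcons past (double_grow c rs past rho D.+1 (rpath rho), rdl rho)
  else past.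

Definition hh (Lx : seq (service R D)) (rho : request D R) : service R D :=
  (double_grow c rs Lx rho D.+1 (rpath rho), rdl rho).

Lemma char_gen p : sorted (fun x y : request D R => rdl x < rdl y) p ->
  let F := foldl step [::] p in
  F = [seq hh F rho | rho <- p & pending F (rdl rho) rho].
Proof.
elim/last_ind: p => [//|p x IH] hs /=.
have hlt : all (fun y : request D R => rdl y < rdl x) p.
  move: hs; rewrite (sorted_pairwise (leT:=fun x y : request D R => rdl x < rdl y)); last first.
    by move=> a b d; apply: lt_trans.
  by rewrite -cats1 pairwise_cat allrel1r => /andP[].
have hsp : sorted (fun x y : request D R => rdl x < rdl y) p.
  by move: hs; rewrite -cats1 => /cat_sorted2 [].
move: (IH hsp) => /= {IH}.
set F := foldl step [::] p => IH.
rewrite foldl_rcons -/F.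
have -> : step F x = if pending F (rdl x) x then rcons F (hh F x) else F by [].
case: ifP => hpx.
- set F' := rcons F _.
  have hpend : forall t g, t <= rdl x -> pending F' t g = pending F t g.
    by move=> t g ht; rewrite /F' pending_rcons.
  rewrite filter_rcons (hpend _ _ (lexx _)) hpx map_rcons.

  have -> : hh F' x = hh F x.
    by rewrite /hh (grow_congr (Q:=F)) // => g; apply: hpend.
  congr rcons.
  rewrite {1}IH.
  have hf : [seq rho <- p | pending F' (rdl rho) rho] = [seq rho <- p | pending F (rdl rho) rho].
    apply: eq_in_filter => y hy; apply: hpend; apply: ltW.
    by move/allP: hlt => /(_ y hy).
  rewrite hf; apply/eq_in_map => y; rewrite mem_filter => /andP[_ hy].
  rewrite /hh (grow_congr (Q:=F)) // => g; apply: hpend; apply: ltW.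
  by move/allP: hlt => /(_ y hy).
- rewrite filter_rcons hpx; exact: IH.
Qed.

Lemma min_dl_None (s : seq (request D R)) : min_dl s = None -> s = [::].
Proof. case: s => //= x s; by case: (min_dl s) => [y|] //; case: ifP. Qed.

Lemma min_dl_Some (s : seq (request D R)) g : min_dl s = Some g ->
  g \in s /\ forall y, y \in s -> rdl g <= rdl y.
Proof.
elim: s g => [//|x s IH] g /=.
case e: (min_dl s) => [y|].
- have [hy hmin] := IH y e.
  case: ifP => hxy [<-].
  + split; first by rewrite inE eqxx.
    move=> z; rewrite inE => /orP[/eqP->//|hz].
    by apply: le_trans (ltW hxy) (hmin z hz).
  + split; first by rewrite inE hy orbT.
    move=> z; rewrite inE => /orP[/eqP->|hz]; last exact: hmin.
    by rewrite leNgt hxy.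
- move=> [<-]; rewrite (min_dl_None e); split; first by rewrite inE.
  by move=> z; rewrite inE => /eqP->.
Qed.

Lemma rpath_dc (rho : request D R) : dc (rpath rho).
Proof. move=> u v huv; rewrite !inE => hv; exact: leq_trans huv hv. Qed.

Lemma rpath_self (rho : request D R) : rnode rho \in rpath rho.
Proof. by rewrite inE. Qed.

Lemma dcU (A B : {set 'I_D}) : dc A -> dc B -> dc (A :|: B).
Proof.
move=> hA hB u v huv; rewrite !inE => /orP[hv|hv].
- by rewrite (hA u v huv hv).
- by rewrite (hB u v huv hv) orbT.
Qed.

Section Grow.
Variables (P : seq (service R D)) (rho : request D R).
Local Notation G := (double_grow c rs P rho).

Lemma grow_sub n (S : {set 'I_D}) : S \subset G n S.
Proof.
elim: n S => [|n IH] S /=; first exact: subxx.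
case: min_dl => [g|]; last exact: subxx.
case: ifP => _; first exact: subxx.
apply: subset_trans (IH _); exact: subsetUl.
Qed.

Lemma grow_dc n (S : {set 'I_D}) : dc S -> dc (G n S).
Proof.
elim: n S => [|n IH] S hS //=.
case: min_dl => [g|] //.
case: ifP => _ //.
apply: IH; apply: dcU => //; exact: rpath_dc.
Qed.

Lemma grow_cost n (S : {set 'I_D}) : set_cost c S <= 2 * set_cost c (rpath rho) ->
  set_cost c (G n S) <= 2 * set_cost c (rpath rho).
Proof.
elim: n S => [|n IH] S hS //=.
case: min_dl => [g|] //.
case: ifP => hc2 //.
apply: IH; rewrite cost_U; by rewrite leNgt hc2.
Qed.

Lemma grow_stop (H : forall g, g \in rs -> pending P (rdl rho) g -> rdl rho <= rdl g) n (S : {set 'I_D}) :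
  (D < #|S| + n)%N ->
  forall rho', rho' \in rs -> pending P (rdl rho) rho' -> ~~ satisfies (G n S, rdl rho) rho' ->
  exists g, [/\ g \in rs, pending P (rdl rho) g, ~~ satisfies (G n S, rdl rho) g,
     rdl g <= rdl rho' &
     2 * set_cost c (rpath rho) < set_cost c (G n S) + set_cost c (rpath g :\: G n S)].
Proof.
elim: n S => [|n IH] S hn.
  exfalso; have hle : (#|S| <= D)%N by rewrite -[X in (_ <= X)%N](card_ord D); exact: max_card.
  move: hn; rewrite addn0 ltnNge hle //.
move=> rho' hr' hp' /=.
case e: min_dl => [g|]; last first.
  move=> hns; move: (min_dl_None e) => /(congr1 (fun s => rho' \in s)).
  by rewrite mem_filter hp' hns hr'.
have [hg hmin] := min_dl_Some e.
move: (hg); rewrite mem_filter => /andP[/andP[hpg hng] hgrs].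
case: ifP => hcost.
- move=> hns; exists g; split => //.
  by apply: hmin; rewrite mem_filter hp' hns hr'.
- move=> hns; apply: IH => //.
  have hgS : rnode g \notin S.
    apply: contra hng => hgS; rewrite /satisfies /= hgS /=.
    apply/andP; split; [by case/andP: hpg | exact: H].
  have : (#|S| < #|S :|: rpath g|)%N.
    apply: proper_card; apply/properP; split; first exact: subsetUl.
    by exists (rnode g); rewrite // !inE leqnn orbT.
  move: hn; lia.
Qed.
End Grow.


Definition L := Double c rs.
Definition T := [seq rho <- srs | pending L (rdl rho) rho].

Lemma charL : L = map (hh L) T.
Proof. exact: (char_gen srs_sorted). Qed.

Lemma inj_dl (x y : request D R) : x \in rs -> y \in rs -> rdl x = rdl y -> x = y.
Proof.
elim: rs hdist => [//|a s IH] /= /andP[ha hu].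
rewrite !inE => /orP[/eqP->|hx] /orP[/eqP->|hy] //.
- move=> e; exfalso; move/negP: ha; apply; rewrite e; exact: map_f.
- move=> e; exfalso; move/negP: ha; apply; rewrite -e; exact: map_f.
- exact: IH.
Qed.

Lemma memL st : st \in L -> exists rho, [/\ rho \in rs, pending L (rdl rho) rho & st = hh L rho].
Proof.
rewrite {1}charL => /mapP [rho]; rewrite mem_filter mem_srs => /andP[hp hr] ->.
by exists rho.
Qed.

Lemma trigL rho : rho \in rs -> pending L (rdl rho) rho -> hh L rho \in L.
Proof. by move=> hr hp; rewrite {2}charL; apply: map_f; rewrite mem_filter mem_srs hp hr. Qed.

Lemma hh_sub rho : rpath rho \subset (hh L rho).1.
Proof. exact: grow_sub. Qed.

Lemma hh_dc rho : dc (hh L rho).1.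
Proof. apply: grow_dc; exact: rpath_dc. Qed.

Lemma hh_cost rho : set_cost c (hh L rho).1 <= 2 * set_cost c (rpath rho).
Proof. apply: grow_cost; have := cost_ge0 (rpath rho); lra. Qed.

Lemma L_time_uniq st1 st2 : st1 \in L -> st2 \in L -> st1.2 = st2.2 -> st1 = st2.
Proof.
move=> /memL [r1 [h1 _ ->]] /memL [r2 [h2 _ ->]] /= e.
by rewrite (inj_dl h1 h2 e).
Qed.

Lemma hh_sat rho : rho \in rs -> satisfies (hh L rho) rho.
Proof.
move=> hr; apply/andP; split.
  by apply: (subsetP (hh_sub rho)); exact: rpath_self.
by rewrite /= lexx andbT; move/allP: hwf => /(_ rho hr).
Qed.

Lemma feasL g : g \in rs -> has (fun st => satisfies st g) L.
Proof.
move=> hg; case hp: (pending L (rdl g) g).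
  by apply/hasP; exists (hh L g); [exact: trigL | exact: hh_sat].
move: hp; rewrite /pending; move/allP: hwf => /(_ g hg) -> /= /negbFE.
by apply: sub_has => st /andP[].
Qed.

Lemma pend_mono g t t' : rarr g <= t -> t <= t' -> pending L t' g -> pending L t g.
Proof.
move=> ha htt /andP[_ hn]; apply/andP; split => //.
apply: contra hn; apply: sub_has => st /andP[h1 h2].
by rewrite h2 andbT; exact: lt_le_trans h1 htt.
Qed.

Lemma pend_le g t : g \in rs -> pending L t g -> t <= rdl g.
Proof.
move=> hg hp; rewrite leNgt; apply/negP => hlt.
have hag : rarr g <= rdl g by move/allP: hwf => /(_ g hg).
have hp' := pend_mono hag (ltW hlt) hp.
move: hp => /andP[_ /negP]; apply; apply/hasP; exists (hh L g).
  exact: trigL.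
by rewrite /= hlt; exact: hh_sat.
Qed.

Lemma hh_rooted rho : rooted_subtree (hh L rho).1.
Proof.
have hdc := @hh_dc rho.
have h0 : Ordinal hD \in (hh L rho).1.
  apply: (hdc (Ordinal hD) (rnode rho)) => //.
  by apply: (subsetP (hh_sub rho)); exact: rpath_self.
apply/andP; split.
  by apply/existsP; exists (Ordinal hD); rewrite h0.
apply/forallP => u; apply/forallP => v; apply/implyP => /andP[hv /eqP huv].
apply: (hdc u v) => //; rewrite -huv; exact: leq_addr.
Qed.


Lemma key rho rho' : rho \in rs -> rho' \in rs -> pending L (rdl rho) rho ->
  pending L (rdl rho') rho' -> rdl rho < rdl rho' -> rarr rho' <= rdl rho ->
  2 * set_cost c (rpath rho) < set_cost c (rpath rho').
Proof.
move=> hr hr' hp hp' hlt harr.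
set t := rdl rho.
have hst : hh L rho \in L by exact: trigL.
set S := double_grow c rs L rho D.+1 (rpath rho).
have hpt' : pending L t rho' := pend_mono harr (ltW hlt) hp'.
have hns' : ~~ satisfies (S, t) rho'.
  apply/negP => hs; move: hp' => /andP[_ /negP]; apply; apply/hasP.
  by exists (hh L rho) => //; rewrite /= hlt.
have hfuel : (D < #|rpath rho| + D.+1)%N by lia.
have [g [hg hpg hng hdl hcost]] :=
  grow_stop (fun g hg hp => pend_le hg hp) hfuel hr' hpt' hns'.
rewrite -/S in hng hcost.
have hgt : t <= rdl g := pend_le hg hpg.
have hag : rarr g <= t by case/andP: hpg.
have hgS : rnode g \notin S.
  by apply: contra hng => hin; rewrite /satisfies /= hin hag hgt.
have hrS : rnode rho' \notin S.
  by apply: contra hns' => hin; rewrite /satisfies /= hin harr ltW.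
have hSdc : dc S := @hh_dc rho.
case: (leqP (val (rnode g)) (val (rnode rho'))) => hv.
- have hsub : S :|: rpath g \subset rpath rho'.
    apply/subsetP => u; rewrite !inE => /orP[hu|hu].
    + rewrite leqNgt; apply/negP => hgt'; move/negP: hrS; apply.
      by apply: (hSdc _ u) => //; exact: ltnW.
    + exact: leq_trans hu hv.
  apply: (lt_le_trans hcost); rewrite -cost_U; exact: cost_sub.
- exfalso.
  have hdlt : rdl g < rdl rho'.
    rewrite lt_neqAle hdl andbT; apply/negP => /eqP e.
    by move: hv; rewrite (inj_dl hg hr' e) ltnn.
  have /hasP [st hstL hsat] := feasL hg.
  move: (hsat) => /andP[hin /andP[hat htd]].
  have htau : t < st.2.
    case: (ltgtP st.2 t) => [hlt2|//|heq].
    + exfalso; move: hpg => /andP[_ /negP]; apply; apply/hasP; exists st => //.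
      by rewrite hlt2.
    + have e := L_time_uniq hstL hst heq.
      by exfalso; move/negP: hng; apply; rewrite e in hsat.
  have [r'' [_ _ est]] := memL hstL.
  have hdc'' : dc st.1 by rewrite est; exact: hh_dc.
  move: hp' => /andP[_ /negP]; apply; apply/hasP; exists st => //.
  rewrite (le_lt_trans htd hdlt) /satisfies.
  rewrite (hdc'' (rnode rho') (rnode g)) ?(ltnW hv) //=.
  rewrite (le_trans harr (ltW htau)) /=.
  exact: ltW (le_lt_trans htd hdlt).
Qed.


Lemma rooted_path (S : {set 'I_D}) (rho : request D R) : rooted_subtree S -> rnode rho \in S -> rpath rho \subset S.
Proof.
move=> /andP[_ /forallP hpar] hin.
have step : forall k (v u : 'I_D), v \in S -> (val u + k)%N = val v -> u \in S.
  elim=> [|k IH] v u hv e.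
    by have -> : u = v by apply: val_inj; rewrite /= -e addn0.
  have hv' : (val v < D)%N := ltn_ord v.
  have hu1 : (val u + 1 < D)%N by lia.
  have hu' := IH v (Ordinal hu1) hv (etrans (esym (addnA _ _ _)) (etrans (congr1 _ (add1n k)) e)).
  by move: (hpar u) => /forallP /(_ (Ordinal hu1)) /implyP; apply; rewrite hu' eqxx.
apply/subsetP => u; rewrite inE => hu.
apply: (step (val (rnode rho) - val u)%N (rnode rho)) => //; exact: subnKC.
Qed.


Lemma T_sorted : sorted (fun x y : request D R => rdl x < rdl y) T.
Proof. apply: sorted_filter; [by move=> ? ? ?; apply: lt_trans | exact: srs_sorted]. Qed.

Lemma memT rho : rho \in T -> rho \in rs /\ pending L (rdl rho) rho.
Proof. by rewrite mem_filter mem_srs => /andP[]. Qed.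

Lemma main_sec :
  feasible rs (Double c rs) /\
  forall sch : seq (service R D), feasible rs sch ->
    sched_cost c (Double c rs) <= (4 - (2 ^+ D)^-1) * sched_cost c sch.
Proof.
split.
  split; first by apply/allP => st /memL [rho [_ _ ->]]; exact: hh_rooted.
  by apply/allP => g hg; exact: feasL.
move=> sch [hroot hsat].
pose w (rho : request D R) := set_cost c (rpath rho).
have step1 : sched_cost c L <= \sum_(rho <- T) 2 * w rho.
  rewrite /sched_cost {1}charL big_map; apply: ler_sum => rho _; exact: hh_cost.
apply: (le_trans step1).
pose st0 : service R D := (set0, 0).
pose f (rho : request D R) := find (fun st => satisfies st rho) sch.
pose n := size sch.
have hf : forall rho, rho \in T -> (f rho < n)%N.
  move=> rho hrho; have [hr _] := memT hrho; rewrite /f /n -has_find; exact: (allP hsat rho hr).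
have hfs : forall rho, rho \in T -> satisfies (nth st0 sch (f rho)) rho.
  move=> rho hrho; have [hr _] := memT hrho; exact: (nth_find st0 (allP hsat rho hr)).
have e1 : \sum_(rho <- T) 2 * w rho =
    \sum_(rho <- T) \sum_(i < n) (if f rho == i then 2 * w rho else 0).
  apply: eq_big_seq => rho hrho.
  rewrite (bigD1 (Ordinal (hf rho hrho))) //= eqxx big1 ?addr0 // => i hi.
  case: eqP => // e; exfalso; move/negP: hi; apply; apply/eqP; apply: val_inj => /=.
  by rewrite e.
rewrite e1 exchange_big /= /sched_cost (big_nth st0) big_mkord mulr_sumr.
apply: ler_sum => i _.
rewrite -big_mkcond /= -big_filter.
set Ti := [seq rho <- T | f rho == i].
set sI := nth st0 sch i.
have hTi : forall rho, rho \in Ti -> [/\ rho \in rs, pending L (rdl rho) rho & satisfies sI rho].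
  move=> rho; rewrite mem_filter => /andP[/eqP hfi hT].
  have [hr hp] := memT hT; split => //; rewrite /sI -hfi; exact: hfs.
have hsIr : rooted_subtree sI.1.
  by move/allP: hroot; apply; rewrite /sI mem_nth.
have hsorted : sorted (fun x y : request D R => 2 * w x < w y) Ti.
  apply: (sub_in_sorted (e := fun x y : request D R => rdl x < rdl y) (P := mem Ti)).
  - move=> x y hx hy hxy.
    have [hrx hpx hsx] := hTi x hx; have [hry hpy hsy] := hTi y hy.
    apply: key => //.
    move: hsx hsy => /andP[_ /andP[_ h1]] /andP[_ /andP[h2 _]].
    exact: le_trans h2 h1.
  - by apply/allP.
  - apply: sorted_filter; [by move=> ? ? ?; apply: lt_trans | exact: T_sorted].
have hw0 : forall rho, 0 <= w rho by move=> rho; exact: cost_ge0.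
have hsz : (size Ti <= D)%N.
  have hlt : sorted <%O (map w Ti).
    rewrite sorted_map; apply: sub_sorted hsorted => x y /=.
    have := hw0 x; move=> h0 h; lra.
  have hu : uniq (map w Ti) by move: hlt; rewrite lt_sorted_uniq_le => /andP[].
  have hu' : uniq (map (@rnode D R) Ti).
    pose wn (v : 'I_D) := set_cost c [set u : 'I_D | (val u <= val v)%N].
    have ew : map w Ti = map wn (map (@rnode D R) Ti) by rewrite -map_comp.
    by move: hu; rewrite ew => /map_uniq.
  rewrite -(size_map (@rnode D R)) -(card_uniqP hu') -[X in (_ <= X)%N](card_ord D).
  exact: max_card.
rewrite -mulr_sumr.
have -> : \sum_(rho <- Ti) w rho = \sum_(x <- map w Ti) x by rewrite big_map.
apply: geom_final => //.
- by rewrite sorted_map.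
- apply/allP => x /mapP [rho hrho ->].
  have [_ _ hs] := hTi rho hrho.
  apply: cost_sub; apply: rooted_path => //; by case/andP: hs.
- exact: cost_ge0.
- by rewrite size_map.
Qed.

End Proof.

Theorem mainTheorem3 (R : realFieldType) (D : nat) (hD : (0 < D)%N)
  (c : 'I_D -> R) (hc : forall u, 0 < c u)
  (rs : seq (request D R))
  (hwf : all (fun rho => rarr rho <= rdl rho) rs)
  (hdist : uniq (map (@rdl D R) rs)) :
  feasible rs (Double c rs) /\
  forall sch : seq (service R D), feasible rs sch ->
    sched_cost c (Double c rs) <= (4 - (2 ^+ D)^-1) * sched_cost c sch.
Proof. exact: (@main_sec R D hD c hc rs hwf hdist). Qed.
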